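(* Let $\mathbb{F}_q$ be any finite field and let $S\subseteq \mathbb{F}_q\setminus\{0\}$ be any symmetric set (i.e. $S=-S$). Then \[\Theta_{\mathrm{lin}}\big(\Gamma(\mathbb{F}_q,S)\big)\le q^{\,1-\frac{|S|}{q-1}}.\] Equivalently, for every $n\ge 1$, every linear subspace of $\mathbb{F}_q^n$ that is an independent set in $\Gamma(\mathbb{F}_q,S)^n$ has dimension $m$ satisfying $\frac{m}{n}\le 1-\frac{|S|}{q-1}$.
   Context: For graphs $G_1,\dots,G_k$, the strong product $G_1\boxtimes\cdots\boxtimes G_k$ has vertex set $V(G_1)\times\cdots\times V(G_k)$, and two distinct vertices $(v_1,\dots,v_k)$ and $(u_1,\dots,u_k)$ are adjacent iff for every $i$, either $v_i=u_i$ or $\{v_i,u_i\}\in E(G_i)$. Write $G^k$ for the strong product of $k$ copies of $G$. For a symmetric set $S\subseteq\mathbb{F}_q\setminus\{0\}$ (with $S=-S$; $S$ need not generate $\mathbb{F}_q$), the Cayley graph $\Gamma(\mathbb{F}_q,S)$ has vertex set $\mathbb{F}_q$, and $u,v$ are adjacent iff $u-v\in S$. For a graph $G$ with $V(G)=\mathbb{F}_q$ and $k\ge1$, the linear independence number $\alpha_{\mathrm{lin}}(G^k)$ is the largest size of an independent set of $G^k$ that is a linear subspace of $\mathbb{F}_q^k$ (equivalently, one of the form $\{(x,Ax):x\in\mathbb{F}_q^m\}$ for some $1\le m\le k$ and some $A\in\mathbb{F}_q^{(k-m)\times m}$, up to the order of coordinates). The linear Shannon capacity is $\Theta_{\mathrm{lin}}(G)=\sup_k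 \alpha_{\mathrm{lin}}(G^k)^{1/k}=\lim_{k\to\infty}\alpha_{\mathrm{lin}}(G^k)^{1/k}$. *)

(* Defs.v *)
From HB Require Import structures.
From mathcomp Require Import all_boot all_order all_algebra all_field.
From mathcomp Require Import all_classical all_reals all_analysis.
Set Implicit Arguments. Unset Strict Implicit. Unset Printing Implicit Defensive.
Import Order.TTheory GRing.Theory Num.Theory.
Local Open Scope ring_scope.

Section Defs.
Variable F : finFieldType.

(* Adjacency in the strong power Gamma(F_q,S)^k : vertices are vectors of F^k
   (row vectors 'rV[F]_k); distinct u, v are adjacent iff in every coordinate
   they are equal or their difference lies in S (Cayley graph adjacency). *)
Definition strong_cayley_adj (S : {set F}) (k : nat) (u v : 'rV[F]_k) : bool :=
  (u != v) && [forall i : 'I_k, (u ord0 i == v ord0 i) || (u ord0 i - v ord0 i \in S)].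

Definition independent_set (S : {set F}) (k : nat) (A : {set 'rV[F]_k}) : bool :=
  [forall u in A, forall v in A, ~~ strong_cayley_adj S u v].

Definition is_subspace (k : nat) (A : {set 'rV[F]_k}) : bool :=
  (0 \in A) && [forall a : F, forall x in A, forall y in A, a *: x + y \in A].

Definition alpha_lin (S : {set F}) (k : nat) : nat :=
  \max_(A : {set 'rV[F]_k} | is_subspace A && independent_set S A) #|A|.

Definition Theta_lin (R : realType) (S : {set F}) : R :=
  sup [set ((alpha_lin S k)%:R `^ (k%:R)^-1 : R) | k in [set k : nat | (0 < k)%N]].

End Defs.

(* Main.v *)
Require Import Defs.
From HB Require Import structures.
From mathcomp Require Import all_boot all_order all_algebra all_field.
From mathcomp Require Import all_classical all_reals all_analysis.
From mathcomp Require Import ring lra.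
Import Order.TTheory GRing.Theory Num.Theory.
Local Open Scope ring_scope.
Set Implicit Arguments. Unset Strict Implicit. Unset Printing Implicit Defensive.

Section Pow.
Variable F : finFieldType.

Lemma card_natr0 : (#|F|%:R : F) = 0.
Proof.
have : \sum_(t : F) (t + 1) = \sum_(t : F) t.
  by rewrite [RHS](reindex_inj (addIr (1 : F))).
rewrite big_split /= sumr_const => /eqP. rewrite -subr_eq0 addrAC subrr add0r => /eqP ->. by [].
Qed.

Lemma exists_pow_ne1 e : (0 < e)%N -> (e < #|F|.-1)%N ->
  exists2 a : F, a != 0 & a ^+ e != 1.
Proof.
move=> e0 elt.
case: (boolP [exists a : F, (a != 0) && (a ^+ e != 1)]).
  by case/existsP=> a /andP[]; exists a.
rewrite negb_exists => /forallP H; exfalso.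
pose rs := [seq t <- enum F | t != 0].
have hsz : size rs = #|F|.-1.
  rewrite size_filter.
  have := count_predC (predC1 (0:F)) (enum F).
  have -> : count (predC (predC1 (0:F))) (enum F) = 1%N.
    rewrite (@eq_count _ _ (pred1 0)); last by move=> x /=; rewrite negbK.
    by rewrite count_uniq_mem ?enum_uniq // mem_enum.
  by rewrite -cardE addn1 => <-.
have := @max_poly_roots _ ('X^e - 1) rs.
rewrite size_Xn_sub_1 //.
have -> : 'X^e - 1 != 0 :> {poly F}.
  by rewrite -size_poly_eq0 size_Xn_sub_1.
rewrite filter_uniq ?enum_uniq // hsz.
have -> : all (root ('X^e - 1)) rs.
  apply/allP=> t; rewrite mem_filter => /andP[t0 _].
  have := H t; rewrite t0 /= negbK => /eqP te.
  by rewrite /root !hornerE te subrr.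
move=> /(_ isT isT isT). by rewrite ltnS leqNgt elt.
Qed.

Lemma sum_pow0 e : (e < #|F|.-1)%N -> \sum_(t : F) t ^+ e = 0.
Proof.
case: e => [_|e elt].
  by under eq_bigr do rewrite expr0; rewrite sumr_const card_natr0.
have [a a0 ae] := @exists_pow_ne1 e.+1 (ltn0Sn e) elt.
have : \sum_(t : F) (a * t) ^+ e.+1 = \sum_(t : F) t ^+ e.+1.
  by rewrite [RHS](reindex_inj (mulfI a0)).
under eq_bigr do rewrite exprMn.
rewrite -mulr_sumr => /eqP; rewrite -subr_eq0 -{2}[\sum__ _]mul1r -mulrBl mulf_eq0.
by rewrite subr_eq0 (negbTE ae) /= => /eqP.
Qed.

Section Rep.
Variable m : nat.
Local Notation V := {ffun 'I_m -> F}.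

Definition mono (e : 'I_m -> nat) (v : V) : F := \prod_j v j ^+ e j.

Definition rep (d : nat) (f : V -> F) :=
  exists s : seq (F * ('I_m -> nat)),
    all (fun p => \sum_j p.2 j <= d)%N s /\
    forall v, f v = \sum_(p <- s) p.1 * mono p.2 v.

Lemma rep_mono d d' f : (d <= d')%N -> rep d f -> rep d' f.
Proof.
move=> dd [s [hs hf]]; exists s; split=> //.
by apply/allP=> p /(allP hs) /leq_trans; apply.
Qed.

Lemma rep_ext d f g : f =1 g -> rep d f -> rep d g.
Proof. by move=> fg [s [hs hf]]; exists s; split=> // v; rewrite -fg. Qed.

Lemma rep_const c : rep 0 (fun _ => c).
Proof.
exists [:: (c, fun _ => 0%N)]; split; first by rewrite /= big1.
move=> v; rewrite big_seq1 /mono /=.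
by rewrite big1 ?mulr1 // => j _; rewrite expr0.
Qed.

Lemma rep_var j : rep 1 (fun v => v j).
Proof.
exists [:: (1, fun k => nat_of_bool (k == j))]; split.
  by rewrite /= andbT (bigD1 j) //= eqxx big1 // => k /negbTE ->.
move=> v; rewrite big_seq1 /mono /= mul1r (bigD1 j) //= eqxx expr1.
by rewrite big1 ?mulr1 // => k /negbTE ->; rewrite expr0.
Qed.

Lemma rep_add d f g : rep d f -> rep d g -> rep d (fun v => f v + g v).
Proof.
move=> [s [hs hf]] [t [ht hg]]; exists (s ++ t); split.
  by rewrite all_cat hs ht.
by move=> v; rewrite big_cat /= hf hg.
Qed.

Lemma rep_mul d1 d2 f g : rep d1 f -> rep d2 g ->
  rep (d1 + d2) (fun v => f v * g v).
Proof.
move=> [s [hs hf]] [t [ht hg]].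
exists [seq (p.1 * p'.1, fun j => (p.2 j + p'.2 j)%N) | p <- s, p' <- t]; split.
  apply/allP=> x /allpairsP [[p p'] /= [ps pt ->]] /=.
  rewrite big_split /= leq_add //.
    exact: (allP hs p ps).
  exact: (allP ht p' pt).
move=> v; rewrite hf hg big_allpairs_dep mulr_suml; apply: eq_bigr => p _.
rewrite mulr_sumr; apply: eq_bigr => p' _ /=.
rewrite /mono -!mulrA; congr (_ * _); rewrite mulrCA; congr (_ * _).
by rewrite -big_split /=; apply: eq_bigr => j _; rewrite exprD.
Qed.

Lemma rep_sum (I : Type) (r : seq I) d (f : I -> V -> F) :
  (forall i, rep d (f i)) -> rep d (fun v => \sum_(i <- r) f i v).
Proof.
move=> hf; elim: r => [|i r IH].
  have h0 := rep_mono (leq0n d) (rep_const 0).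
  apply: (rep_ext _ h0) => v; by rewrite big_nil.
by apply: (rep_ext _ (rep_add (hf i) IH)) => v; rewrite big_cons.
Qed.

Lemma rep_prod (I : Type) (r : seq I) d (f : I -> V -> F) :
  (forall i, rep d (f i)) -> rep (size r * d) (fun v => \prod_(i <- r) f i v).
Proof.
move=> hf; elim: r => [|i r IH].
  apply: (rep_ext _ (rep_const 1)) => v; by rewrite big_nil.
by apply: (rep_ext _ (rep_mul (hf i) IH)) => v; rewrite big_cons.
Qed.

Lemma rep_sum0 d f : rep d f -> (d < m * #|F|.-1)%N -> \sum_(v : V) f v = 0.
Proof.
move=> [s [hs hf]] dlt.
under eq_bigr do rewrite hf.
rewrite exchange_big big1_seq // => p /andP[_ ps] /=.
rewrite -mulr_sumr; apply/eqP; rewrite mulf_eq0; apply/orP; right; apply/eqP.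
have -> : \sum_(v : V) mono p.2 v = \prod_(j : 'I_m) \sum_(t : F) t ^+ p.2 j.
  by rewrite bigA_distr_bigA.
have [j hj] : exists j, (p.2 j < #|F|.-1)%N.
  case: (boolP [exists j, (p.2 j < #|F|.-1)%N]) => [/existsP//|].
  rewrite negb_exists => /forallP H; exfalso.
  have := allP hs p ps; rewrite leqNgt => /negP; apply.
  apply: leq_trans dlt _.
  rewrite -[X in (X * _)%N]card_ord -sum_nat_const; apply: leq_sum => j _.
  by have := H j; rewrite -leqNgt.
by rewrite (bigD1 j) //= sum_pow0 // mul0r.
Qed.
End Rep.
End Pow.

Section Main.
Variables (F : finFieldType) (n : nat) (S : {set F}) (A : {set 'rV[F]_n}).
Hypotheses (hS0 : 0 \notin S) (hA : is_subspace A) (hI : independent_set S A).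
Let U := <<enum A>>%VS : {vspace 'rV[F]_n}.
Let d := \dim U.
Let b := vbasis U.
Let T := [set t : F | (t != 0) && (t \notin S)].

Lemma card_A_le : (#|A| <= #|F| ^ d)%N.
Proof.
rewrite -card_vspace; apply: subset_leq_card; apply/fintype.subsetP => x xA.
by apply: memv_span; rewrite mem_enum.
Qed.

Lemma A0 : 0 \in A. Proof. by case/andP: hA. Qed.

Lemma A_lin a x y : x \in A -> y \in A -> a *: x + y \in A.
Proof.
case/andP: hA => _ /forallP /(_ a) /forall_inP H xA yA.
by have /forall_inP := H x xA; apply.
Qed.

Lemma A_add x y : x \in A -> y \in A -> x + y \in A.
Proof. by move=> xA yA; rewrite -[x]scale1r A_lin. Qed.

Lemma A_scale a x : x \in A -> a *: x \in A.
Proof. by move=> xA; rewrite -[_ *: _]addr0 A_lin // A0. Qed.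

Lemma A_sum (I : Type) (r : seq I) (f : I -> 'rV[F]_n) :
  (forall i, f i \in A) -> \sum_(i <- r) f i \in A.
Proof.
move=> hf; elim: r => [|i r IH]; first by rewrite big_nil A0.
by rewrite big_cons A_add.
Qed.

Lemma UA v : v \in U -> v \in A.
Proof.
move=> /(@coord_span _ _ _ (in_tuple (enum A))) ->.
apply: A_sum => i; apply: A_scale.
by rewrite -mem_enum mem_nth.
Qed.

Lemma bA j : b`_j \in A.
Proof.
case: (ltnP j d) => jd; last by rewrite nth_default ?A0 // size_tuple.
by apply/UA/vbasis_mem/mem_nth; rewrite size_tuple.
Qed.

Definition comb (y : {ffun 'I_d -> F}) : 'rV[F]_n := \sum_j y j *: b`_j.

Lemma combA y : comb y \in A.
Proof. by apply: A_sum => j; apply/A_scale/bA. Qed.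

Lemma comb_inj y : comb y = 0 -> y = 0.
Proof.
move=> h; apply/ffunP => j; rewrite ffunE.
have /freeP H := basis_free (vbasisP U).
exact: (H (fun j => y j) h).
Qed.

Lemma combE y i : comb y 0 i = \sum_j y j * b`_j 0 i.
Proof. by rewrite /comb summxE; apply: eq_bigr => j _; rewrite mxE. Qed.

Lemma indep x : x \in A -> x != 0 -> exists i, x 0 i \in T.
Proof.
move=> xA x0; move/forall_inP: hI => /(_ x xA) /forall_inP /(_ 0 A0).
rewrite /strong_cayley_adj x0 /= negb_forall => /existsP [i].
rewrite negb_or mxE subr0 => /andP [h1 h2]; exists i.
by rewrite inE h1 h2.
Qed.

Definition Pf (y : {ffun 'I_d -> F}) : F :=
  \prod_(i <- enum 'I_n) \prod_(s <- enum T) (comb y 0 i - s).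

Lemma Pf_rep : rep (n * (#|T| * 1)) Pf.
Proof.
rewrite -{1}[n]card_ord cardE cardE.
apply: rep_prod => i; apply: rep_prod => s.
have hl : rep 1 (fun y : {ffun 'I_d -> F} => \sum_j y j * b`_j 0 i).
  apply: rep_sum => j. have h := rep_mul (rep_var F j) (rep_const d (b`_j 0 i)).
  rewrite addn0 in h. exact: h.
apply: (rep_ext _ (rep_add hl (rep_mono (leq0n 1) (rep_const d (- s))))).
by move=> y /=; rewrite combE.
Qed.

Lemma Pf0 : Pf 0 != 0.
Proof.
rewrite prodf_seq_neq0; apply/allP => i _ /=.
rewrite prodf_seq_neq0; apply/allP => s; rewrite mem_enum inE => /andP[s0 _] /=.
by rewrite /comb big1 ?mxE ?sub0r ?oppr_eq0 // => j _; rewrite ffunE scale0r.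
Qed.

Lemma Pf_nz y : y != 0 -> Pf y = 0.
Proof.
move=> y0; have cA := combA y.
have c0 : comb y != 0 by apply: contra y0 => /eqP /comb_inj ->.
have [i hi] := indep cA c0.
rewrite /Pf (big_rem i) ?mem_enum //= (big_rem (comb y 0 i)) ?mem_enum //=.
by rewrite subrr mul0r mul0r.
Qed.

Lemma dim_bound : (d * #|F|.-1 <= n * #|T|)%N.
Proof.
rewrite leqNgt; apply/negP => hlt.
have := rep_sum0 Pf_rep; rewrite muln1 => /(_ hlt) /eqP.
rewrite (bigD1 (0 : {ffun 'I_d -> F})) //= big1 ?addr0 ?(negbTE Pf0) // => y; exact: Pf_nz.
Qed.
End Main.

Lemma cardT (F : finFieldType) (S : {set F}) : 0 \notin S ->
  addn #|[set t : F | (t != 0) && (t \notin S)]| #|S| = #|F|.-1.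
Proof.
move=> hS0.
have -> : [set t : F | (t != 0) && (t \notin S)] = ~: ((0 : F) |: S).
  by apply/setP => t; rewrite !inE negb_or.
have := cardsC ((0 : F) |: S); rewrite cardsU1 hS0 /= => <-.
by rewrite addnC -addnA add1n addnC.
Qed.

Unset Implicit Arguments. Set Strict Implicit.
Theorem theorem1 (R : realType) (F : finFieldType) (S : {set F})
  (hS0 : 0 \notin S) (hSsym : forall x : F, x \in S -> - x \in S) :
  Theta_lin R S <=
    (#|F|%:R : R) `^ (1 - #|S|%:R / (#|F|%:R - 1)).
Proof.
set c := 1 - _.
have hq1 : (1 < #|F|)%N by exact: finNzRing_gt1.
have q1 : (1 : R) <= #|F|%:R by rewrite ler1n ltnW.
have q10 : (0 : R) < #|F|%:R - 1 by rewrite subr_gt0 ltr1n.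
have hT := cardT hS0.
set T := [set t : F | (t != 0) && (t \notin S)] in hT.
have hq : (#|F|%:R : R) = (#|T| + #|S|)%:R + 1.
  by rewrite natr1 hT prednK // ltnW.
rewrite /Theta_lin; apply: ge_sup.
  by exists ((alpha_lin S 1)%:R `^ (1%:R)^-1); exists 1%N.
move=> _ [k /= k0 <-].
set B := (#|F|%:R : R) `^ (k%:R * c).
have B0 : 0 <= B by exact: powR_ge0.
have hA : forall A : {set 'rV[F]_k}, is_subspace A && independent_set S A ->
    (#|A|%:R : R) <= B.
  move=> A /andP [sA iA].
  have hd := dim_bound sA iA.
  have hc := card_A_le A.
  set d := \dim _ in hd hc.
  apply: (@le_trans _ _ ((#|F| ^ d)%N%:R)); first by rewrite ler_nat.
  rewrite natrX -powR_mulrn ?ler0n //; apply: ler_powR => //.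
  have e : (k%:R : R) * c = (k%:R * (#|F|%:R - 1 - #|S|%:R)) / (#|F|%:R - 1).
    rewrite /c; field; by rewrite lt0r_neq0.
  rewrite e ler_pdivlMr //.
  move: hd; rewrite -(ler_nat R) -/T !natrM -hT natrD hq natrD.
  move: (d%:R : R) (k%:R : R) (#|T|%:R : R) (#|S|%:R : R) => x y z w.
  have -> : z + w + 1 - 1 - w = z by ring.
  by rewrite addrK.
have ha : ((alpha_lin S k)%:R : R) <= B.
  rewrite /alpha_lin; apply: (big_ind (fun x : nat => (x%:R : R) <= B)) => //.
    by move=> x y hx hy; rewrite /maxn; case: ifP.
have -> : (#|F|%:R : R) `^ c = B `^ (k%:R)^-1.
  rewrite /B -powRrM mulrAC mulfV ?mul1r // pnatr_eq0 -lt0n //.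
apply: ge0_ler_powR => //.
by rewrite nnegrE ler0n.
Qed.
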